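(* Let $X$ be a finite set and let $\tau\subseteq\binom{X}{2}$ with $L(\tau)=X$. The following are equivalent: (i) $\tau$ is thin, i.e. $|L(\tau')|\ge|\tau'|+1$ for every non-empty $\tau'\subseteq\tau$; (ii) there exists a rooted binary phylogenetic $X$-tree $T$ for which the map $s\mapsto{\rm lca}_T(s)$ from $\tau$ to the set of interior vertices of $T$ is one-to-one; (iii) as in (ii), but with $T$ a rooted caterpillar tree.
   Context: $L(\tau)=\bigcup_{s\in\tau}s$. A rooted binary phylogenetic $X$-tree is a rooted tree whose leaves (out-degree 0) are bijectively labelled by $X$ and whose non-leaf vertices are unlabelled with out-degree exactly 2. Interior vertices are non-leaf vertices. A cherry is a pair of leaves adjacent to a common vertex; a rooted caterpillar tree is a rooted binary phylogenetic tree with at most one cherry. For $s\subseteq X$, ${\rm lca}_T(s)$ is the least common ancestor in $T$ of the leaves in $s$. *)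

(* Defs.v *)
From mathcomp Require Import all_boot.
Set Implicit Arguments. Unset Strict Implicit. Unset Printing Implicit Defensive.

Inductive btree (T : Type) : Type :=
| Leaf of T
| Node of btree T & btree T.
Arguments Leaf {T} _.
Arguments Node {T} _ _.

Section Phylo.
Variable X : finType.

Fixpoint leaves (t : btree X) : seq X :=
  match t with Leaf x => [:: x] | Node l r => leaves l ++ leaves r end.

Definition phylo_tree (t : btree X) : bool :=
  uniq (leaves t) && all (fun x => x \in leaves t) (enum X).

(* Vertices are addressed by their path from the root
   (false = left child, true = right child). *)
Fixpoint subtree_at (t : btree X) (p : seq bool) : option (btree X) :=
  match p, t with
  | [::], _ => Some t
  | b :: p', Node l r => subtree_at (if b then r else l) p'
  | _ :: _, Leaf _ => None
  end.

Definition is_interior (t : btree X) (p : seq bool) : bool :=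
  if subtree_at t p is Some (Node _ _) then true else false.

Fixpoint lca (t : btree X) (s : {set X}) : seq bool :=
  match t with
  | Leaf _ => [::]
  | Node l r =>
      if s \subset [set x | x \in leaves l] then false :: lca l s
      else if s \subset [set x | x \in leaves r] then true :: lca r s
      else [::]
  end.

Fixpoint cherries (t : btree X) : nat :=
  match t with
  | Leaf _ => 0
  | Node (Leaf _) (Leaf _) => 1
  | Node l r => cherries l + cherries r
  end.

Definition caterpillar (t : btree X) : bool := cherries t <= 1.

Definition Lset (tau : {set {set X}}) : {set X} := \bigcup_(s in tau) s.

Definition thin (tau : {set {set X}}) : Prop :=
  forall tau' : {set {set X}}, tau' \subset tau -> tau' != set0 ->
    #|tau'| + 1 <= #|Lset tau'|.

Definition lca_injective (t : btree X) (tau : {set {set X}}) : Prop :=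
  (forall s, s \in tau -> is_interior t (lca t s)) /\
  {in tau &, injective (lca t)}.

End Phylo.

(* Main.v *)
Require Import Defs.
From mathcomp Require Import all_boot zify.

Section S.
Variable X : finType.
Implicit Types (t : btree X) (s Y : {set X}) (sig : {set {set X}}).

Lemma Lset_mono sig1 sig2 : sig1 \subset sig2 -> Lset sig1 \subset Lset sig2.
Proof.
move=> H; apply/bigcupsP => s Hs; apply: (bigcup_sup s); exact: (subsetP H).
Qed.

Lemma Lset_sub sig Y : (forall s, s \in sig -> s \subset Y) -> Lset sig \subset Y.
Proof. by move=> H; apply/bigcupsP. Qed.

Lemma in_Lset sig s : s \in sig -> s \subset Lset sig.
Proof. by move=> H; apply: (bigcup_sup s). Qed.

Lemma Lset0 : Lset (set0 : {set {set X}}) = set0.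
Proof. by rewrite /Lset big_set0. Qed.

Lemma card_disj (A B : {set X}) : (forall x, x \in A -> x \in B -> False) ->
  #|A :|: B| = #|A| + #|B|.
Proof.
move=> H; rewrite cardsU.
have -> : A :&: B = set0.
  apply/setP=> x; rewrite !inE; apply/negP => /andP [h1 h2]; exact: (H x h1 h2).
by rewrite cards0 subn0.
Qed.

Lemma card2_notsub1 (x : X) s : #|s| = 2 -> ~~ (s \subset [set y | y \in [:: x]]).
Proof.
move=> Hs; apply/negP => /subset_leq_card.
have -> : [set y | y \in [:: x]] = [set x] by apply/setP => y; rewrite !inE.
by rewrite cards1 Hs.
Qed.

Lemma lca_interior t s : #|s| = 2 -> s \subset [set x | x \in leaves t] ->
  is_interior t (lca t s).
Proof.
elim: t => [x|l IHl r IHr] Hs Hsub /=.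
  by move: (@card2_notsub1 x s Hs); rewrite Hsub.
case: ifP => H1; first by rewrite /is_interior /=; apply: IHl.
case: ifP => H2; first by rewrite /is_interior /=; apply: IHr.
by [].
Qed.

Lemma arith1 (a b A B L : nat) (x y : bool) : a+1 <= A+x -> b+1 <= B+y -> A+B <= L ->
  a+b+0+1 <= L + (x && y).
Proof. by case: x; case: y => /=; lia. Qed.

Lemma arith2 (a b A B P Q L : nat) (x y : bool) : A+x <= P -> B+y <= Q -> P+Q <= L ->
  a+1 <= A+x -> b+1 <= B+y -> a+b+1+1 <= L + false.
Proof. by case: x; case: y => /=; lia. Qed.

Lemma count_lemma t : uniq (leaves t) -> forall sig,
  (forall s, s \in sig -> #|s| = 2 /\ s \subset [set x | x \in leaves t]) ->
  {in sig &, injective (lca t)} ->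
  #|sig| + 1 <= #|Lset sig| + (sig == set0).
Proof.
elim: t => [x|l IHl r IHr] Hu sig Hsig Hinj.
  case: (set_0Vmem sig) => [->|[s Hs]]; first by rewrite eqxx Lset0 !cards0.
  have [Hc Hsub] := Hsig s Hs.
  by move: (@card2_notsub1 x s Hc); rewrite Hsub.
move: Hu; rewrite /= cat_uniq => /and3P [Hul Hdis Hur].
set Ll := [set x | x \in leaves l].
set Lr := [set x | x \in leaves r].
have HD : forall x, x \in Ll -> x \in Lr -> False.
  move=> x; rewrite !inE => h1 h2; move/hasPn: Hdis => /(_ x h2).
  by rewrite h1.
set sl := sig :&: [set s : {set X} | s \subset Ll].
set s' := sig :\: [set s : {set X} | s \subset Ll].
set sr := s' :&: [set s : {set X} | s \subset Lr].
set sm := s' :\: [set s : {set X} | s \subset Lr].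
have Hcard : #|sig| = #|sl| + #|sr| + #|sm|.
  by rewrite -addnA !cardsID.
have Hsl : forall s, s \in sl -> s \in sig /\ s \subset Ll.
  by move=> s; rewrite /sl !inE => /andP [].
have Hsr : forall s, s \in sr -> [/\ s \in sig, ~~ (s \subset Ll) & s \subset Lr].
  by move=> s; rewrite /sr /s' !inE; case: (s \in sig); case: (s \subset Ll); case: (s \subset Lr).
have Hsm : forall s, s \in sm -> [/\ s \in sig, ~~ (s \subset Ll) & ~~ (s \subset Lr)].
  by move=> s; rewrite /sm /s' !inE; case: (s \in sig); case: (s \subset Ll); case: (s \subset Lr).
have IL := IHl Hul sl.
have IR := IHr Hur sr.
have {}IL : #|sl| + 1 <= #|Lset sl| + (sl == set0).
  apply: IL.
    move=> s /Hsl [h1 h2]; split => //; exact: (Hsig s h1).1.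
  move=> s1 s2 /Hsl [a1 b1] /Hsl [a2 b2] E; apply: Hinj => //=.
  by rewrite b1 b2 E.
have {}IR : #|sr| + 1 <= #|Lset sr| + (sr == set0).
  apply: IR.
    move=> s /Hsr [h1 _ h2]; split => //; exact: (Hsig s h1).1.
  move=> s1 s2 /Hsr [a1 b1 c1] /Hsr [a2 b2 c2] E; apply: Hinj => //=.
  by rewrite (negbTE b1) (negbTE b2) c1 c2 E.
have Hm1 : #|sm| <= 1.
  apply/card_le1_eqP => s1 s2 /Hsm [a1 b1 c1] /Hsm [a2 b2 c2]; apply: Hinj => //=.
  by rewrite (negbTE b1) (negbTE b2) (negbTE c1) (negbTE c2).
have HLl : Lset sl \subset Ll by apply: Lset_sub => s /Hsl [].
have HLr : Lset sr \subset Lr by apply: Lset_sub => s /Hsr [].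
have Hsub_l : Lset sl \subset Lset sig by apply: Lset_mono; apply/subsetP => s /Hsl [].
have Hsub_r : Lset sr \subset Lset sig by apply: Lset_mono; apply/subsetP => s /Hsr [].
have Hlr : #|Lset sl| + #|Lset sr| <= #|Lset sig|.
  rewrite -card_disj; last first.
    move=> x h1 h2; apply: (HD x); [exact: (subsetP HLl) | exact: (subsetP HLr)].
  by apply: subset_leq_card; rewrite subUset Hsub_l Hsub_r.
have E0 : (sig == set0) = [&& sl == set0, sr == set0 & sm == set0].
  by rewrite -!cards_eq0 Hcard; case: #|sl| => [|?]; case: #|sr| => [|?]; case: #|sm|.
case: (set_0Vmem sm) => [Em|[s Hs]].
  move: E0 Hcard; rewrite Em eqxx cards0 andbT => E0 Hcard.
  rewrite E0 Hcard; exact: arith1 IL IR Hlr.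
have [Hs1 Hs2 Hs3] := Hsm s Hs.
have [Hc Hsub] := Hsig s Hs1.
have Hsm1 : #|sm| = 1.
  by apply/eqP; rewrite eqn_leq Hm1 card_gt0; apply/set0Pn; exists s.
have E0' : (sig == set0) = false.
  by rewrite E0 -(cards_eq0 sm) Hsm1 !andbF.
have Hpl : exists2 x, x \in s & x \in Ll.
  move/subsetPn: Hs3 => [x h1 h2]; exists x => //.
  move/subsetP: Hsub => /(_ x h1); rewrite !inE mem_cat => /orP [] //.
  by move: h2; rewrite inE => /negP.
have Hpr : exists2 x, x \in s & x \in Lr.
  move/subsetPn: Hs2 => [x h1 h2]; exists x => //.
  move/subsetP: Hsub => /(_ x h1); rewrite !inE mem_cat => /orP [] //.
  by move: h2; rewrite inE => /negP.
have HA : #|Lset sl| + (sl == set0) <= #|Lset sl :|: (s :&: Ll)|.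
  case: eqP => [->|_]; last by rewrite addn0 subset_leq_card // subsetUl.
  rewrite Lset0 set0U cards0 /= card_gt0; apply/set0Pn.
  by case: Hpl => x h1 h2; exists x; rewrite inE h1 h2.
have HB : #|Lset sr| + (sr == set0) <= #|Lset sr :|: (s :&: Lr)|.
  case: eqP => [->|_]; last by rewrite addn0 subset_leq_card // subsetUl.
  rewrite Lset0 set0U cards0 /= card_gt0; apply/set0Pn.
  by case: Hpr => x h1 h2; exists x; rewrite inE h1 h2.
have HAB : #|Lset sl :|: (s :&: Ll)| + #|Lset sr :|: (s :&: Lr)| <= #|Lset sig|.
  rewrite -card_disj; last first.
    have HUl : Lset sl :|: (s :&: Ll) \subset Ll by rewrite subUset HLl subsetIr.
    have HUr : Lset sr :|: (s :&: Lr) \subset Lr by rewrite subUset HLr subsetIr.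
    move=> x h1 h2; apply: (HD x); [exact: (subsetP HUl) | exact: (subsetP HUr)].
  apply: subset_leq_card; rewrite !subUset Hsub_l Hsub_r /=.
  have Hss := @in_Lset sig s Hs1.
  by rewrite (subset_trans (subsetIl s Ll) Hss) (subset_trans (subsetIl s Lr) Hss).
rewrite Hcard Hsm1 E0'; exact: arith2 HA HB HAB IL IR.
Qed.

Lemma handshake sig Y : (forall s, s \in sig -> s \subset Y /\ #|s| = 2) ->
  \sum_(y in Y) #|[set s in sig | y \in s]| = #|sig| * 2.
Proof.
move=> H.
have H1 : forall y, #|[set s in sig | y \in s]| = \sum_(s in sig) (y \in s).
  by move=> y; rewrite -sum1dep_card big_mkcondr.
rewrite (eq_bigr _ (fun y _ => H1 y)) exchange_big /= -sum_nat_const.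
apply: eq_bigr => s Hs.
have [Hsub Hc] := H s Hs.
rewrite -Hc.
have E : [set y | (y \in Y) && (y \in s)] = s.
  apply/setP => y; rewrite inE; case Hy: (y \in s); last by rewrite andbF.
  by rewrite (subsetP Hsub y Hy).
transitivity (\sum_(y in Y | y \in s) 1).
  by rewrite big_mkcondr; apply: eq_bigr => y _; case: (y \in s).
by rewrite sum1dep_card E.
Qed.

Lemma degree tau Y (x0 : X) : thin tau -> (forall s, s \in tau -> #|s| = 2) -> x0 \in Y ->
  exists2 y, y \in Y & #|[set s in [set s in tau | s \subset Y] | y \in s]| <= 1.
Proof.
move=> Hthin H2 Hx0.
set sig := [set s in tau | s \subset Y].
case: (boolP [exists y in Y, #|[set s in sig | y \in s]| <= 1]) => [/exists_inP [y h1 h2]|Hn].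
  by exists y.
exfalso.
have Hall : forall y, y \in Y -> 2 <= #|[set s in sig | y \in s]|.
  by move=> y hy; move/exists_inPn: Hn => /(_ y hy); rewrite ltnNge.
have Hsig : forall s, s \in sig -> s \subset Y /\ #|s| = 2.
  by move=> s; rewrite inE => /andP [h1 h2]; split => //; apply: H2.
have HS := @handshake sig Y Hsig.
have Hge : #|Y| * 2 <= #|sig| * 2.
  by rewrite -HS -sum_nat_const; apply: leq_sum => y hy; apply: Hall.
have HY0 : 0 < #|Y| by rewrite card_gt0; apply/set0Pn; exists x0.
have Hne : sig != set0 by rewrite -cards_eq0; move: Hge HY0; move: #|Y| #|sig| => a b; lia.
have Hsub : sig \subset tau by apply/subsetP => s; rewrite inE => /andP [].
have Ht := Hthin sig Hsub Hne.
have HL : #|Lset sig| <= #|Y|.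
  by apply: subset_leq_card; apply: Lset_sub => s /Hsig [].
by move: Ht HL Hge; move: #|Y| #|sig| #|Lset sig| => a b c; lia.
Qed.

Lemma build tau : thin tau -> (forall s, s \in tau -> #|s| = 2) ->
  forall n Y, #|Y| = n.+1 -> exists t, [/\ uniq (leaves t),
    (forall x, (x \in leaves t) = (x \in Y)), cherries t <= 1 &
    {in [set s in tau | s \subset Y] &, injective (lca t)}].
Proof.
move=> Hthin H2; elim=> [|n IH] Y HY.
  move/eqP/cards1P: HY => [x ->]; exists (Leaf x); split => //.
    by move=> z; rewrite !inE.
  move=> s1 s2; rewrite inE => /andP [h1 h2]; exfalso.
  by move: (subset_leq_card h2); rewrite cards1 (H2 s1 h1).
have [x0 Hx0] : exists x0, x0 \in Y.
  by apply/set0Pn; rewrite -card_gt0 HY.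
have [y Hy Hdeg] := @degree tau Y x0 Hthin H2 Hx0.
have HY' : #|Y :\ y| = n.+1 by move: HY; rewrite (cardsD1 y Y) Hy => [[]].
have [t [Hu Hmem Hch Hinj]] := IH _ HY'.
have yt : y \notin leaves t by rewrite Hmem !inE eqxx.
exists (Node t (Leaf y)); split.
- by rewrite /= cat_uniq Hu /= orbF yt.
- by move=> z; rewrite /= mem_cat Hmem !inE; case: (z =P y) => [->|] /=; rewrite ?Hy ?orbF //.
- by case: t {Hu Hmem Hinj yt} Hch => //= a b; rewrite addn0.
have Elt : [set x | x \in leaves t] = Y :\ y by apply/setP => z; rewrite inE Hmem.
have Lc : forall s, s \in [set s in tau | s \subset Y] ->
    lca (Node t (Leaf y)) s = if s \subset Y :\ y then false :: lca t s else [::].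
  move=> s; rewrite inE => /andP [h1 h2]; rewrite /= Elt; case: ifP => // _.
  by rewrite (negbTE (@card2_notsub1 y s (H2 s h1))).
have Hyin : forall s, s \subset Y -> ~~ (s \subset Y :\ y) -> y \in s.
  move=> s h1 /subsetPn [z hz1 hz2].
  move: hz2; rewrite !inE (subsetP h1 z hz1) andbT negbK => /eqP <-; exact: hz1.
move=> s1 s2 Hs1 Hs2; rewrite !Lc //.
move: (Hs1) (Hs2); rewrite !inE => /andP [a1 b1] /andP [a2 b2].
case: ifP => h1; case: ifP => h2 // .
  by move=> [] E; apply: Hinj => //; rewrite inE ?a1 ?a2 ?h1 ?h2.
move=> _; move/card_le1_eqP: Hdeg; apply; rewrite !inE ?a1 ?a2 ?b1 ?b2 /=;
  apply: Hyin => //; rewrite ?h1 ?h2 //.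
Qed.

End S.

Lemma thin_cat (X : finType) (tau : {set {set X}}) : 0 < #|X| ->
  (forall s, s \in tau -> #|s| = 2) -> thin tau ->
  exists t : btree X, phylo_tree t /\ caterpillar t /\ lca_injective t tau.
Proof.
move=> hX H2 Hthin.
have HT : #|[set: X]| = (#|X|.-1).+1 by rewrite cardsT prednK.
have [t [Hu Hmem Hch Hinj]] := @build X tau Hthin H2 _ _ HT.
exists t; split.
  by rewrite /phylo_tree Hu /=; apply/allP => x _; rewrite Hmem inE.
split => //; split.
  move=> s Hs; apply: lca_interior; first exact: H2.
  by apply/subsetP => x _; rewrite inE Hmem inE.
by move=> s1 s2 h1 h2; apply: Hinj; rewrite inE subsetT andbT.
Qed.

Theorem theorem4 (X : finType) (tau : {set {set X}})
  (hX : 0 < #|X|)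
  (htau2 : forall s, s \in tau -> #|s| = 2)
  (hL : Lset tau = setT) :
  (thin tau <-> exists t : btree X, phylo_tree t /\ lca_injective t tau) /\
  ((exists t : btree X, phylo_tree t /\ lca_injective t tau) <->
   (exists t : btree X, phylo_tree t /\ caterpillar t /\ lca_injective t tau)).
Proof.
have ii_i : (exists t : btree X, phylo_tree t /\ lca_injective t tau) -> thin tau.
  move=> [t [Hp [_ Hinj]]] tau' Hsub Hne.
  move/andP: Hp => [Hu /allP Hall].
  have := @count_lemma X t Hu tau'.
  rewrite (negbTE Hne) addn0; apply.
    move=> s Hs; split; first exact: htau2 (subsetP Hsub s Hs).
    by apply/subsetP => x _; rewrite inE; apply: Hall; rewrite mem_enum.
  by move=> s1 s2 h1 h2; apply: Hinj; apply: (subsetP Hsub).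
have i_iii := @thin_cat X tau hX htau2.
split; split.
- by move=> H; have [t [h1 [_ h3]]] := i_iii H; exists t.
- exact: ii_i.
- by move=> H; apply: i_iii; apply: ii_i.
- by move=> [t [h1 [_ h3]]]; exists t.
Qed.
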